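(* Let $A(x_1,\dots,x_4)$ be the matrix $$A(x_1,x_2,x_3,x_4)=\begin{bmatrix}x_1 & x_2 & x_3 & x_4\\ -nx_2 & x_1+mx_2 & -nx_4 & x_3+mx_4\\ -qx_3 & -qx_4 & x_1+px_3 & x_2+px_4\\ qnx_4 & -q(x_3+mx_4) & -nx_2-pnx_4 & x_1+mx_2+p(x_3+mx_4)\end{bmatrix},$$ let $P(x_1,\dots,x_8)=\begin{bmatrix}A(x_1,\dots,x_4) & A(x_5,\dots,x_8)\\ -sA(x_5,\dots,x_8) & A(x_1,\dots,x_4)+rA(x_5,\dots,x_8)\end{bmatrix}$, and $f=\det P$, with parameter values $(m,n,p,q,r,s)=(0,-5,0,-3,0,-14)$. Then the octic diophantine equation $f(x_1,\dots,x_8)=1$ has infinitely many solutions in positive integers (one of them being $(4,2,2,1,14,7,8,4)$). *)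

(* Defs.v *)
From mathcomp Require Import all_boot all_order all_algebra.
Set Implicit Arguments. Unset Strict Implicit. Unset Printing Implicit Defensive.
Import GRing.Theory Num.Theory.
Local Open Scope ring_scope.

Definition Amat (m n p q : int) (x1 x2 x3 x4 : int) : 'M[int]_4 :=
  \matrix_(i < 4, j < 4)
    (nth 0 (nth [::] (
    [:: [:: x1; x2; x3; x4];
        [:: - n * x2; x1 + m * x2; - n * x4; x3 + m * x4];
        [:: - q * x3; - q * x4; x1 + p * x3; x2 + p * x4];
        [:: q * n * x4; - q * (x3 + m * x4); - n * x2 - p * n * x4;
            x1 + m * x2 + p * (x3 + m * x4)] ] : seq (seq int)) i) j).

Definition Pmat (m n p q r s : int) (x : {ffun 'I_8 -> int}) : 'M[int]_(4 + 4) :=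
  let A1 := Amat m n p q (x (inord 0)) (x (inord 1)) (x (inord 2)) (x (inord 3)) in
  let A2 := Amat m n p q (x (inord 4)) (x (inord 5)) (x (inord 6)) (x (inord 7)) in
  block_mx A1 A2 (- s *: A2) (A1 + r *: A2).

Definition fpoly (m n p q r s : int) (x : {ffun 'I_8 -> int}) : int :=
  \det (Pmat m n p q r s x).

Definition f0 (x : {ffun 'I_8 -> int}) : int := fpoly 0 (-5) 0 (-3) 0 (-14) x.

Definition pos_solution (x : {ffun 'I_8 -> int}) : Prop :=
  (forall i, 0 < x i) /\ f0 x = 1.

Definition tup8 (a b c d e g h k : int) : {ffun 'I_8 -> int} :=
  [ffun i : 'I_8 => nth 0 [:: a; b; c; d; e; g; h; k] i].

(* Main.v *)
Require Import Defs.
From mathcomp Require Import all_boot all_order all_algebra.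
From mathcomp Require Import ring lra zify.
Set Implicit Arguments. Unset Strict Implicit. Unset Printing Implicit Defensive.
Import GRing.Theory Num.Theory.
Local Open Scope ring_scope.

Definition Am := Amat 0 (-5) 0 (-3).
Definition am1 (a1 a2 a3 a4 b1 b2 b3 b4 : int) := a1*b1+5*a2*b2+3*a3*b3+15*a4*b4.
Definition am2 (a1 a2 a3 a4 b1 b2 b3 b4 : int) := a1*b2+a2*b1+3*(a3*b4+a4*b3).
Definition am3 (a1 a2 a3 a4 b1 b2 b3 b4 : int) := a1*b3+a3*b1+5*(a2*b4+a4*b2).
Definition am4 (a1 a2 a3 a4 b1 b2 b3 b4 : int) := a1*b4+a4*b1+a2*b3+a3*b2.

Lemma Amul a1 a2 a3 a4 b1 b2 b3 b4 :
  Am a1 a2 a3 a4 *m Am b1 b2 b3 b4 =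
  Am (am1 a1 a2 a3 a4 b1 b2 b3 b4) (am2 a1 a2 a3 a4 b1 b2 b3 b4)
     (am3 a1 a2 a3 a4 b1 b2 b3 b4) (am4 a1 a2 a3 a4 b1 b2 b3 b4).
Proof.
apply/matrixP=> i j; rewrite !mxE !big_ord_recr big_ord0 /= !mxE /am1 /am2 /am3 /am4.
by case: i => [[|[|[|[|i]]]] Hi] //; case: j => [[|[|[|[|j]]]] Hj] //=; ring.
Qed.

Lemma AmD a1 a2 a3 a4 b1 b2 b3 b4 :
  Am a1 a2 a3 a4 + Am b1 b2 b3 b4 = Am (a1+b1) (a2+b2) (a3+b3) (a4+b4).
Proof.
apply/matrixP=> i j; rewrite !mxE.
by case: i => [[|[|[|[|i]]]] Hi] //; case: j => [[|[|[|[|j]]]] Hj] //=; ring.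
Qed.

Lemma AmZ k a1 a2 a3 a4 :
  k *: Am a1 a2 a3 a4 = Am (k*a1) (k*a2) (k*a3) (k*a4).
Proof.
apply/matrixP=> i j; rewrite !mxE.
by case: i => [[|[|[|[|i]]]] Hi] //; case: j => [[|[|[|[|j]]]] Hj] //=; ring.
Qed.

Lemma AmN a1 a2 a3 a4 : - Am a1 a2 a3 a4 = Am (-a1) (-a2) (-a3) (-a4).
Proof.
apply/matrixP=> i j; rewrite !mxE.
by case: i => [[|[|[|[|i]]]] Hi] //; case: j => [[|[|[|[|j]]]] Hj] //=; ring.
Qed.

Definition N4 (a b c d : int) :=
  (a^+2 + 5*b^+2 - 3*c^+2 - 15*d^+2)^+2 - 5 * (2*a*b - 6*c*d)^+2.

Definition ent n (M : 'M[int]_n.+1) (i j : nat) := M (inord i) (inord j).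
Arguments ent : simpl never.
Lemma entE n (M : 'M[int]_n.+1) (i j : 'I_n.+1) : M i j = ent M i j.
Proof. by rewrite /ent !inord_val. Qed.

Lemma det3 (M : 'M[int]_3) : \det M =
  ent M 0 0 * (ent M 1 1 * ent M 2 2 - ent M 1 2 * ent M 2 1)
  - ent M 0 1 * (ent M 1 0 * ent M 2 2 - ent M 1 2 * ent M 2 0)
  + ent M 0 2 * (ent M 1 0 * ent M 2 1 - ent M 1 1 * ent M 2 0).
Proof.
rewrite (expand_det_row _ 0) !big_ord_recr big_ord0 /= /cofactor.
rewrite !(expand_det_row _ 0) !big_ord_recr !big_ord0 /= /cofactor.
rewrite !det_mx11 !mxE !entE /=.
ring.
Qed.

Lemma detAm a b c d : \det (Am a b c d) = N4 a b c d.
Proof.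
rewrite (expand_det_row _ ord0) !big_ord_recr big_ord0 /= /cofactor !det3.
rewrite /ent !mxE /= !inordK //=.
rewrite /N4; ring.
Qed.

Lemma det_block_comm n (A B C D : 'M[int]_n) :
  C *m D = D *m C -> \det D != 0 ->
  \det (block_mx A B C D) = \det (A *m D - B *m C).
Proof.
move=> hCD hD.
have E : block_mx A B C D *m block_mx D 0 (- C) 1%:M =
         block_mx (A *m D - B *m C) B 0 D.
  by rewrite mulmx_block !mulmx0 !mulmx1 !add0r !mulmxN hCD subrr.
have := congr1 determinant E.
rewrite det_mulmx det_lblock det_ublock det1 mulr1 => H.
exact: (mulIf hD).
Qed.

Lemma tup8E a b c d e g h k (i : nat) : (i < 8)%N ->
  tup8 a b c d e g h k (inord i) = nth 0 [:: a; b; c; d; e; g; h; k] i.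
Proof. by move=> Hi; rewrite ffunE inordK. Qed.

Lemma tup8E0 a b c d e g h k : tup8 a b c d e g h k (inord 0) = a.
Proof. by rewrite tup8E. Qed.
Lemma tup8E1 a b c d e g h k : tup8 a b c d e g h k (inord 1) = b.
Proof. by rewrite tup8E. Qed.
Lemma tup8E2 a b c d e g h k : tup8 a b c d e g h k (inord 2) = c.
Proof. by rewrite tup8E. Qed.
Lemma tup8E3 a b c d e g h k : tup8 a b c d e g h k (inord 3) = d.
Proof. by rewrite tup8E. Qed.
Lemma tup8E4 a b c d e g h k : tup8 a b c d e g h k (inord 4) = e.
Proof. by rewrite tup8E. Qed.
Lemma tup8E5 a b c d e g h k : tup8 a b c d e g h k (inord 5) = g.
Proof. by rewrite tup8E. Qed.
Lemma tup8E6 a b c d e g h k : tup8 a b c d e g h k (inord 6) = h.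
Proof. by rewrite tup8E. Qed.
Lemma tup8E7 a b c d e g h k : tup8 a b c d e g h k (inord 7) = k.
Proof. by rewrite tup8E. Qed.

Definition P0 := Pmat 0 (-5) 0 (-3) 0 (-14).

Lemma PmatE x : P0 x = block_mx
  (Am (x (inord 0)) (x (inord 1)) (x (inord 2)) (x (inord 3)))
  (Am (x (inord 4)) (x (inord 5)) (x (inord 6)) (x (inord 7)))
  (Am (14 * x (inord 4)) (14 * x (inord 5)) (14 * x (inord 6)) (14 * x (inord 7)))
  (Am (x (inord 0)) (x (inord 1)) (x (inord 2)) (x (inord 3))).
Proof. by rewrite /P0 /Pmat -/Am scale0r addr0 opprK AmZ. Qed.

Definition mul16 (a1 a2 a3 a4 a5 a6 a7 a8 b1 b2 b3 b4 b5 b6 b7 b8 : int)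
  : {ffun 'I_8 -> int} :=
  tup8 (am1 a1 a2 a3 a4 b1 b2 b3 b4 + 14 * am1 a5 a6 a7 a8 b5 b6 b7 b8)
       (am2 a1 a2 a3 a4 b1 b2 b3 b4 + 14 * am2 a5 a6 a7 a8 b5 b6 b7 b8)
       (am3 a1 a2 a3 a4 b1 b2 b3 b4 + 14 * am3 a5 a6 a7 a8 b5 b6 b7 b8)
       (am4 a1 a2 a3 a4 b1 b2 b3 b4 + 14 * am4 a5 a6 a7 a8 b5 b6 b7 b8)
       (am1 a1 a2 a3 a4 b5 b6 b7 b8 + am1 a5 a6 a7 a8 b1 b2 b3 b4)
       (am2 a1 a2 a3 a4 b5 b6 b7 b8 + am2 a5 a6 a7 a8 b1 b2 b3 b4)
       (am3 a1 a2 a3 a4 b5 b6 b7 b8 + am3 a5 a6 a7 a8 b1 b2 b3 b4)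
       (am4 a1 a2 a3 a4 b5 b6 b7 b8 + am4 a5 a6 a7 a8 b1 b2 b3 b4).

Definition mul8 (x y : {ffun 'I_8 -> int}) :=
  mul16 (x (inord 0)) (x (inord 1)) (x (inord 2)) (x (inord 3))
        (x (inord 4)) (x (inord 5)) (x (inord 6)) (x (inord 7))
        (y (inord 0)) (y (inord 1)) (y (inord 2)) (y (inord 3))
        (y (inord 4)) (y (inord 5)) (y (inord 6)) (y (inord 7)).


Lemma Pmul x y : P0 (mul8 x y) = P0 x *m P0 y.
Proof.
rewrite !PmatE mulmx_block !Amul !AmD /mul8 /mul16.
rewrite !(tup8E0,tup8E1,tup8E2,tup8E3,tup8E4,tup8E5,tup8E6,tup8E7).
congr block_mx; congr Am.
all: rewrite /am1 /am2 /am3 /am4; ring.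
Qed.

Lemma f0mul x y : f0 (mul8 x y) = f0 x * f0 y.
Proof. by rewrite /f0 /fpoly -/P0 Pmul det_mulmx. Qed.

Definition u := tup8 4 2 2 1 14 7 8 4.

Lemma f0u : f0 u = 1.
Proof.
rewrite /f0 /fpoly -/P0 PmatE det_block_comm.
- rewrite !Amul AmN !AmD detAm /u !(tup8E0,tup8E1,tup8E2,tup8E3,tup8E4,tup8E5,tup8E6,tup8E7) /N4 /am1 /am2 /am3 /am4. ring.
- by rewrite !Amul /am1 /am2 /am3 /am4; congr Am; ring.
- rewrite detAm /u !(tup8E0,tup8E1,tup8E2,tup8E3,tup8E4,tup8E5,tup8E6,tup8E7) /N4.
  have -> : ((4:int) ^+ 2 + 5 * 2 ^+ 2 - 3 * 2 ^+ 2 - 15 * 1 ^+ 2) ^+ 2 -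
    5 * (2 * 4 * 2 - 6 * 2 * 1) ^+ 2 = 1 by ring.
  by [].
Qed.

Fixpoint sol (k : nat) : {ffun 'I_8 -> int} :=
  match k with 0%N => u | k'.+1 => mul8 (sol k') u end.

Lemma f0sol k : f0 (sol k) = 1.
Proof. by elim: k => [|k IH] //=; rewrite ?f0u // f0mul IH f0u mulr1. Qed.

Lemma ord8_cases (P : 'I_8 -> Prop) :
  P (inord 0) -> P (inord 1) -> P (inord 2) -> P (inord 3) ->
  P (inord 4) -> P (inord 5) -> P (inord 6) -> P (inord 7) -> forall i, P i.
Proof.
move=> p0 p1 p2 p3 p4 p5 p6 p7 i; rewrite -(inord_val i).
by case: i => [[|[|[|[|[|[|[|[|i]]]]]]]] Hi].
Qed.

Lemma solpos k : (forall i, 0 < sol k i) /\ (k%:Z < sol k (inord 0)).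
Proof.
elim: k => [|k [IH IH0]].
  split; last by rewrite [sol 0]/= /u tup8E0.
  by apply: ord8_cases; rewrite [sol 0]/= /u !(tup8E0,tup8E1,tup8E2,tup8E3,tup8E4,tup8E5,tup8E6,tup8E7).
have h0 := IH (inord 0); have h1 := IH (inord 1); have h2 := IH (inord 2);
have h3 := IH (inord 3); have h4 := IH (inord 4); have h5 := IH (inord 5);
have h6 := IH (inord 6); have h7 := IH (inord 7).
move: IH0 h0 h1 h2 h3 h4 h5 h6 h7.
rewrite [sol k.+1]/= /mul8 /mul16 /u !(tup8E0,tup8E1,tup8E2,tup8E3,tup8E4,tup8E5,tup8E6,tup8E7).
set x0 := sol k (inord 0); set x1 := sol k (inord 1); set x2 := sol k (inord 2);
set x3 := sol k (inord 3); set x4 := sol k (inord 4); set x5 := sol k (inord 5);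
set x6 := sol k (inord 6); set x7 := sol k (inord 7) => H h0 h1 h2 h3 h4 h5 h6 h7.
split; last by rewrite /am1; lia.
by apply: ord8_cases; rewrite !(tup8E0,tup8E1,tup8E2,tup8E3,tup8E4,tup8E5,tup8E6,tup8E7) /am1 /am2 /am3 /am4; lia.
Qed.

Theorem mainTheorem11 :
  pos_solution (tup8 4 2 2 1 14 7 8 4) /\
  (forall s : seq {ffun 'I_8 -> int}, exists x, pos_solution x /\ x \notin s).
Proof.
split.
  split; last exact: f0u.
  by apply: ord8_cases; rewrite !(tup8E0,tup8E1,tup8E2,tup8E3,tup8E4,tup8E5,tup8E6,tup8E7).
move=> s.
pose N := (\sum_(y <- s) absz (y (inord 0)))%N.
exists (sol N); split.
  by split; [exact: (solpos N).1 | exact: f0sol].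
apply/negP => Hin.
have := (solpos N).2.
have : (absz (sol N (inord 0)) <= N)%N.
  have gen : forall y, y \in s -> (absz (y (inord 0)) <= \sum_(z <- s) absz (z (inord 0)))%N.
    by move=> y Hy; rewrite (big_rem _ Hy) /=; exact: leq_addr.
  exact: gen.
lia.
Qed.
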